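(* There exists a universal constant $C>0$ with the following property. Let $n, M \in \mathbb{N}$, $0<\alpha<\tfrac12$, and $0<\delta<\tfrac12\min\left(1,\frac{C\alpha^{2}}{\sqrt{M}}\right)$. Let $\mu_M$ and $\nu_{M,\delta}$ be the probability measures on $[n]^M$ defined in the context. Then $$\|\mu_{M}-\nu_{M,\delta}\|_{\mathrm{TV}}\le \alpha .$$
   Context: $[n]=\{1,\dots,n\}$. For probability measures $\mu,\nu$ on a common measurable space, $\|\mu-\nu\|_{\mathrm{TV}}=\sup_A|\mu(A)-\nu(A)|$. The measure $\mu_M$ is the uniform distribution on $[n]^M$, i.e. the law of a vector $E=(E[1],\dots,E[M])$ with $E[i]$ i.i.d. uniform on $\{1,\dots,n\}$. The measure $\nu_{M,\delta}$ (for $0<\delta<1$) is the law of the vector $D=(D[1],\dots,D[M])$ constructed as follows: sample $E[1],\dots,E[M]$ i.i.d. uniform on $\{1,\dots,n\}$, independently sample $B[1],\dots,B[M]$ i.i.d. $\mathrm{Bernoulli}(\delta)$ and $E^{+}[1],\dots,E^{+}[M]$ i.i.d. uniform on $\{\lceil n/2\rceil,\dots,n\}$, and set $D[i]=E[i]$ if $B[i]=0$ and $D[i]=E^{+}[i]$ if $B[i]=1$. The constant $C$ does not depend on $n,M,\alpha,\delta$. *)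

(* Defs.v *)
From HB Require Import structures.
From mathcomp Require Import all_boot all_order all_algebra.
From mathcomp Require Import reals.
Set Implicit Arguments. Unset Strict Implicit. Unset Printing Implicit Defensive.
Import Order.TTheory GRing.Theory Num.Theory.
Local Open Scope ring_scope.

(* The set [n] = {1,...,n} is represented by 'I_n, the ordinal i standing
   for the label i.+1.  A point of [n]^M is a function 'I_M -> 'I_n. *)
Definition label (n : nat) (i : 'I_n) : nat := i.+1.

Definition point (n M : nat) := {ffun 'I_M -> 'I_n}.

(* {ceil(n/2), ..., n} inside [n]  (ceil(n/2) = uphalf n). *)
Definition upper_half (n : nat) : {set 'I_n} :=
  [set i : 'I_n | uphalf n <= label i]%N.

Section Pmfs.
Variable R : realType.

Definition unif_pmf (T : finType) (A : {set T}) (x : T) : R :=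
  if x \in A then (#|A|%:R)^-1 else 0.

Definition bern_pmf (d : R) (b : bool) : R := if b then d else 1 - d.

Definition mu_M (n M : nat) (A : {set point n M}) : R :=
  \sum_(e in A) \prod_(i < M) unif_pmf [set: 'I_n] (e i).

(* The sample space of (E, B, E^+) and the map to D. *)
Definition omega (n M : nat) : finType :=
  ({ffun 'I_M -> 'I_n} * {ffun 'I_M -> bool} * {ffun 'I_M -> 'I_n})%type.

Definition D_of (n M : nat) (w : omega n M) : point n M :=
  [ffun i => if w.1.2 i then w.2 i else w.1.1 i].

Definition omega_pmf (n M : nat) (delta : R) (w : omega n M) : R :=
  \prod_(i < M) (unif_pmf [set: 'I_n] (w.1.1 i)
                 * bern_pmf delta (w.1.2 i)
                 * unif_pmf (upper_half n) (w.2 i)).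

Definition nu_M (n M : nat) (delta : R) (A : {set point n M}) : R :=
  \sum_(w : omega n M | D_of w \in A) omega_pmf delta w.

Definition tv_dist (n M : nat) (mu nu : {set point n M} -> R) : R :=
  \big[Num.max/0]_(A : {set point n M}) `|mu A - nu A|.

End Pmfs.

(* Main.v *)
Require Import Defs.
From HB Require Import structures.
From mathcomp Require Import all_boot all_order all_algebra.
From mathcomp Require Import reals.
From mathcomp Require Import ring lra zify.
Import Order.TTheory GRing.Theory Num.Theory.
Local Open Scope ring_scope.

Lemma sum_ge_count (m n : nat) : (\sum_(i < n) (m <= i.+1)%N)%N = (n - m.-1)%N.
Proof.
elim: n => [|n IH]; first by rewrite big_ord0.
rewrite big_ord_recr /= IH.
case: (leqP m n.+1) => H /=; lia.
Qed.

Lemma card_upper n : #|upper_half n| = (n - (uphalf n).-1)%N.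
Proof.
rewrite -sum1_card -sum_ge_count [RHS](bigID (fun i : 'I_n => (uphalf n <= i.+1)%N)) /=.
rewrite [X in (_ + X)%N]big1 ?addn0; last by move=> i /negbTE ->.
apply: eq_big => [i|i]; by rewrite /upper_half inE //= => ->.
Qed.

Lemma upper_bounds (n : nat) : (1 <= n)%N -> (1 <= #|upper_half n|)%N /\ (n <= 2 * #|upper_half n|)%N.
Proof.
move=> Hn; rewrite card_upper; rewrite uphalf_half.
have := half_leq (leqnn n). have := odd_double_half n. case: (odd n) => /=; lia.
Qed.


Section S.
Variable R : realType.
Variables n M : nat.
Variable delta : R.

Lemma prod_sum (f : 'I_n -> R) :
  \sum_(x : point n M) \prod_(i < M) f (x i) = (\sum_a f a) ^+ M.
Proof.
by rewrite -(bigA_distr_bigA (fun (i : 'I_M) a => f a)) /= prodr_const card_ord.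
Qed.

Lemma indic_prod (y x : point n M) :
  ((y == x)%:R : R) = \prod_(i < M) ((y i == x i)%:R).
Proof.
case: (pickP (fun i => y i != x i)) => [i Hi|H].
  rewrite (bigD1 i) //= (negbTE Hi) mul0r.
  case: eqP => // E; by rewrite E eqxx in Hi.
have -> : y = x by apply/ffunP => i; have := H i; rewrite /= => /negbFE/eqP.
by rewrite eqxx big1 // => i _; rewrite eqxx.
Qed.

Definition u (a : 'I_n) : R := unif_pmf R [set: 'I_n] a.
Definition v (a : 'I_n) : R := unif_pmf R (upper_half n) a.
Definition q1 (a : 'I_n) : R := delta * v a + (1 - delta) * u a.

Lemma sum_pick (T : finType) (y : T) (f : T -> R) :
  \sum_(c : T) ((c == y)%:R * f c) = f y.
Proof.
rewrite (bigD1 y) //= eqxx mul1r big1 ?addr0 // => c /negbTE ->; by rewrite mul0r.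
Qed.

Hypothesis Hn : (1 <= n)%N.

Lemma invn_mulrn (k : nat) : (0 < k)%N -> (k%:R : R)^-1 *+ k = 1.
Proof. by move=> Hk; rewrite -(mulr_natr (k%:R^-1) k) mulVf // pnatr_eq0 -lt0n. Qed.

Lemma sum_u : \sum_a u a = 1.
Proof.
by rewrite /u /unif_pmf -big_mkcond sumr_const cardsT card_ord invn_mulrn.
Qed.

Lemma sum_v : \sum_a v a = 1.
Proof.
have [H1 _] := upper_bounds n Hn.
by rewrite /v /unif_pmf -big_mkcond sumr_const invn_mulrn.
Qed.

Lemma nu_point (x : point n M) :
  \sum_(w : omega n M | D_of w == x) omega_pmf delta w = \prod_(i < M) q1 (x i).
Proof.
pose h (i : 'I_M) (a : 'I_n) (b : bool) (c : 'I_n) : R :=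
  ((if b then c else a) == x i)%:R * (u a * bern_pmf delta b * v c).
transitivity (\sum_(w : omega n M) \prod_(i < M) h i (w.1.1 i) (w.1.2 i) (w.2 i)).
  rewrite big_mkcond /=; apply: eq_bigr => w _.
  rewrite /h big_split /=.
  have -> : \prod_(i < M) (((if w.1.2 i then w.2 i else w.1.1 i) == x i)%:R : R)
            = (D_of w == x)%:R.
    by rewrite indic_prod; apply: eq_bigr => i _; rewrite ffunE.
  by case: ifP => _; rewrite ?mul1r ?mul0r.
transitivity (\sum_(eb : {ffun 'I_M -> 'I_n} * {ffun 'I_M -> bool})
               \sum_(c : {ffun 'I_M -> 'I_n}) \prod_(i < M) h i (eb.1 i) (eb.2 i) (c i)).
  by rewrite pair_big /=.
transitivity (\sum_(eb : {ffun 'I_M -> 'I_n} * {ffun 'I_M -> bool})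
               \prod_(i < M) \sum_(c : 'I_n) h i (eb.1 i) (eb.2 i) c).
  by apply: eq_bigr => eb _; rewrite bigA_distr_bigA.
transitivity (\sum_(e : {ffun 'I_M -> 'I_n}) \sum_(b : {ffun 'I_M -> bool})
               \prod_(i < M) \sum_(c : 'I_n) h i (e i) (b i) c).
  by rewrite pair_big /=.
transitivity (\sum_(e : {ffun 'I_M -> 'I_n}) 
               \prod_(i < M) \sum_(b : bool) \sum_(c : 'I_n) h i (e i) b c).
  by apply: eq_bigr => e _; rewrite bigA_distr_bigA.
rewrite -(bigA_distr_bigA (fun i a => \sum_(b : bool) \sum_(c : 'I_n) h i a b c)) /=; apply: eq_bigr => i _.
have Ea : forall a, \sum_(b : bool) \sum_(c : 'I_n) h i a b c
   = u a * delta * v (x i) + (a == x i)%:R * u a * (1 - delta).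
  move=> a; rewrite big_bool /h /=.
  rewrite (sum_pick _ (x i) (fun c => u a * delta * v c)).
  congr (_ + _).
  under eq_bigr => c _ do rewrite mulrA -mulrA.
  by rewrite -mulr_sumr -mulr_sumr sum_v mulr1 mulrA.
under eq_bigr => a _ do rewrite Ea.
rewrite big_split /= -!mulr_suml sum_u mul1r.
by rewrite (sum_pick _ (x i) u) /q1 (mulrC _ (1 - delta)).
Qed.

Lemma u_val a : u a = n%:R^-1.
Proof. by rewrite /u /unif_pmf in_setT cardsT card_ord. Qed.

Lemma sum_v2 : \sum_a v a ^+ 2 = (#|upper_half n|%:R)^-1.
Proof.
have [H1 _] := upper_bounds n Hn.
rewrite /v /unif_pmf.
under eq_bigr => a _ do rewrite (fun_if (fun z => z ^+ 2)) expr0n /=.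
have Kz : (#|upper_half n|%:R : R) != 0 by rewrite pnatr_eq0 -lt0n.
rewrite -big_mkcond sumr_const.
set K := (#|upper_half n|%:R : R) in Kz *.
by rewrite -mulr_natr -/K expr2 -mulrA mulVf ?mulr1.
Qed.

Lemma sum_q1 : \sum_a q1 a = 1.
Proof.
by rewrite /q1 big_split /= -!mulr_sumr sum_u sum_v !mulr1 addrC subrK.
Qed.

Lemma sum_q1sq : \sum_a q1 a ^+ 2 / u a =
  n%:R * delta ^+ 2 / #|upper_half n|%:R + 2 * delta * (1 - delta) + (1 - delta) ^+ 2.
Proof.
have nz : (n%:R : R) != 0 by rewrite pnatr_eq0 -lt0n.
have E : forall a, q1 a ^+ 2 / u a =
   (n%:R * delta ^+ 2) * v a ^+ 2 + (2 * delta * (1 - delta)) * v a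
   + ((1 - delta) ^+ 2 * n%:R^-1).
  by move=> a; rewrite /q1 !u_val; field.
under eq_bigr => a _ do rewrite E.
rewrite !big_split /= -!mulr_sumr sum_v2 sum_v sumr_const card_ord.
set N := (n%:R : R) in nz E *.
rewrite -mulr_natr -/N invn_mulrn // !mulr1. reflexivity.
Qed.

Lemma sum_q1sq_le : 0 <= delta -> \sum_a q1 a ^+ 2 / u a <= 1 + delta ^+ 2.
Proof.
move=> d0.
have [H1 H2] := upper_bounds n Hn.
rewrite sum_q1sq.
have kpos : (0 : R) < #|upper_half n|%:R by rewrite ltr0n.
have H2' : (n%:R : R) <= 2 * #|upper_half n|%:R.
  by rewrite -(natrM R 2) ler_nat.
have : n%:R * delta ^+ 2 / #|upper_half n|%:R <= 2 * delta ^+ 2.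
  rewrite ler_pdivrMr //.
  have : 0 <= delta ^+ 2 by rewrite sqr_ge0.
  nra.
nra.
Qed.

End S.

Lemma pow_bound (R : realType) (y : R) (m : nat) :
  0 <= y -> m%:R * y <= 1 / 2 -> (1 + y) ^+ m <= 1 + 2 * m%:R * y.
Proof.
move=> y0; elim: m => [|m IH] H; first by rewrite expr0 mulr0 mul0r addr0.
have Hm : m%:R * y <= 1 / 2.
  apply: le_trans H; rewrite ler_wpM2r // ler_nat; exact: leqnSn.
rewrite exprSr.
apply: (le_trans (y := (1 + 2 * m%:R * y) * (1 + y))).
  rewrite ler_wpM2r //; last exact: IH.
  by rewrite addr_ge0.
rewrite -natr1 in H *.
have m0 : (0 : R) <= m%:R by rewrite ler0n.
nra.
Qed.

Lemma pointwise (R : realType) (P Q a : R) : 0 < P -> 0 < a ->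
  `|P - Q| <= (Q ^+ 2 / P - 2 * Q + P) / (2 * a) + P * a / 2.
Proof.
move=> P0 a0.
have -> : (Q ^+ 2 / P - 2 * Q + P) / (2 * a) + P * a / 2
          = ((P - Q) ^+ 2 + (P * a) ^+ 2) / (2 * (P * a)).
  by field; rewrite !gt_eqF.
have t0 : 0 < 2 * (P * a) by rewrite !mulr_gt0.
rewrite ler_pdivlMr // -(real_normK (num_real (P - Q))).
have : 0 <= `|P - Q| by [].
have : 0 < P * a by rewrite mulr_gt0.
set y := `|P - Q|. set t := P * a. have := sqr_ge0 (y - t). clearbody y t. nra.
Qed.


Theorem lemma2 (R : realType) :
  exists C : R, 0 < C /\
  forall (n M : nat) (alpha delta : R),
    (1 <= n)%N ->
    0 < alpha -> alpha < 1 / 2 ->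
    0 < delta ->
    delta < 1 / 2 ->
    delta * Num.sqrt (M%:R) < C * alpha ^+ 2 / 2 ->
    tv_dist (@mu_M R n M) (nu_M delta) <= alpha.
Proof.
exists 1; split; first exact: ltr01.
move=> n M alpha delta Hn a0 a1 d0 d1 Hd.
pose P (x : point n M) := \prod_(i < M) u R n (x i).
pose Q (x : point n M) := \prod_(i < M) q1 R n delta (x i).
have u0 : forall a, 0 < u R n a by move=> a; rewrite u_val invr_gt0 ltr0n.
have P0 : forall x, 0 < P x by move=> x; apply: prodr_gt0 => i _.
have sP : \sum_x P x = 1 by rewrite prod_sum sum_u // expr1n.
have sQ : \sum_x Q x = 1 by rewrite prod_sum sum_q1 // expr1n.
have sQ2 : \sum_x Q x ^+ 2 / P x = (\sum_a q1 R n delta a ^+ 2 / u R n a) ^+ M.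
  rewrite -prod_sum; apply: eq_bigr => x _; by rewrite /P /Q -prodrXl -prodf_div.
have hS : \sum_x Q x ^+ 2 / P x - 1 <= alpha ^+ 2.
  rewrite sQ2.
  have H1 : (\sum_a q1 R n delta a ^+ 2 / u R n a) ^+ M <= (1 + delta ^+ 2) ^+ M.
    apply: lerXn2r; last exact: sum_q1sq_le (ltW d0).
      rewrite nnegrE; apply: sumr_ge0 => a _; rewrite divr_ge0 ?sqr_ge0 ?ltW //.
    by rewrite nnegrE addr_ge0 ?sqr_ge0.
  have Hm : M%:R * delta ^+ 2 < alpha ^+ 4 / 4.
    have s0 := sqrtr_ge0 (M%:R : R).
    have Hs := sqr_sqrtr (ler0n R M).
    rewrite mul1r in Hd; rewrite -Hs.
    have : 0 <= delta * Num.sqrt (M%:R) by apply: mulr_ge0 => //; exact: ltW.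
    nra.
  have a4 : alpha ^+ 4 = alpha ^+ 2 * alpha ^+ 2 by rewrite -exprD.
  have a2p : 0 < alpha ^+ 2 by rewrite exprn_gt0.
  have a2l : alpha ^+ 2 < 1 / 4 by rewrite expr2; nra.
  rewrite a4 in Hm.
  have Mh : M%:R * delta ^+ 2 <= 1 / 2 by nra.
  have Hb := pow_bound R (delta ^+ 2) M (sqr_ge0 _) Mh.
  nra.
rewrite /tv_dist; apply: bigmax_le => [|A _]; first exact: ltW.
have muA : mu_M R A = \sum_(x in A) P x by [].
have nuA : nu_M delta A = \sum_(x in A) Q x.
  rewrite /nu_M (partition_big (@D_of n M) (mem A)) //=.
  apply: eq_bigr => x Hx; rewrite /Q -(nu_point R n M delta Hn); apply: eq_bigl => w.
  by rewrite andbC; case: eqP => // ->; rewrite Hx.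
rewrite muA nuA -sumrB.
apply: le_trans (ler_norm_sum _ _ _) _.
apply: (le_trans (y := \sum_x `|P x - Q x|)).
  rewrite [X in _ <= X](bigID (mem A)) /= lerDl sumr_ge0 //.
apply: (le_trans (y := \sum_x ((Q x ^+ 2 / P x - 2 * Q x + P x) / (2 * alpha) + P x * alpha / 2))).
  by apply: ler_sum => x _; exact: pointwise.
rewrite big_split /= -!mulr_suml !big_split /= sumrN -mulr_sumr sQ sP.
set S := \sum_x Q x ^+ 2 / P x in hS *.
have : (S - 2 * 1 + 1) / (2 * alpha) <= alpha / 2.
  rewrite ler_pdivrMr ?mulr_gt0 //; nra.
lra.
Qed.
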